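(* In the social learning model, assume there exist $c>0$, $k>0$ and $x_0>0$ such that $G_-(-x)=c\,x^{-k}$ and $G_+(x)=1-c\,x^{-k}$ for all $x>x_0$. Then there exists $M>0$ such that, for every realization of the actions, every $t\ge2$ and every $1\le s\le t$, $|\ell_s|\le M\,\ell^*_t$.
   Context: Social learning model. A state $\theta\in\{-1,+1\}$ is drawn with $\mathbb{P}(\theta=+1)=\mathbb{P}(\theta=-1)=1/2$. Agents $t=1,2,\dots$ receive private signals $s_t\in\mathbb{R}$ that are i.i.d. conditionally on $\theta$, with CDF $F_+$ if $\theta=+1$ and $F_-$ if $\theta=-1$; $F_+$ and $F_-$ are mutually absolutely continuous. Let $L_t=\log\frac{\mathbb{P}(\theta=+1\mid s_t)}{\mathbb{P}(\theta=-1\mid s_t)}$ be the private log-likelihood ratio, and let $G_+$, $G_-$ denote the CDFs of $L_t$ conditional on $\theta=+1$, $\theta=-1$ respectively. Signals are assumed unbounded: for every $M\in\mathbb{R}$, $\mathbb{P}(L_t>M)>0$ and $\mathbb{P}(L_t<-M)>0$. Agent $t$ observes $a_1,\dots,a_{t-1}$ and her own signal and chooses $a_t\in\{-1,+1\}$ (utility $1$ if $a_t=\theta$, else $0$). The public belief is $\mu_t=\mathbb{P}(\theta=+1\mid a_1,\dots,a_{t-1})$ and $\ell_t=\log\frac{\mu_t}{1-\mu_t}$ (so $\ell_1=0$). In equilibrium $a_t=+1$ iff $\ell_t+L_t>0$, and otherwise $a_t=-1$. Consequently $\ell_{t+1}=\ell_t+D_+(\ell_t)$ if $a_t=+1$ and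 $\ell_{t+1}=\ell_t+D_-(\ell_t)$ if $a_t=-1$, where $D_+(x)=\log\frac{1-G_+(-x)}{1-G_-(-x)}$ and $D_-(x)=\log\frac{G_+(-x)}{G_-(-x)}$. We write $\mathbb{P}_+(\cdot)=\mathbb{P}(\cdot\mid\theta=+1)$ and $\mathbb{E}_+$ for the corresponding expectation. $\ell^*_t$ denotes the value of $\ell_t$ on the event $a_1=\cdots=a_{t-1}=+1$, i.e., $\ell^*_1=0$ and $\ell^*_{t+1}=\ell^*_t+D_+(\ell^*_t)$. *)

(* Defs.v *)
From Stdlib Require Import Reals Lra Lia.
Open Scope R_scope.

Definition is_cdf (G : R -> R) : Prop :=
  (forall x y, x <= y -> G x <= G y) /\
  (forall x eps, 0 < eps -> exists d, 0 < d /\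
       forall y, x <= y < x + d -> G y - G x < eps) /\
  (forall eps, 0 < eps -> exists N, forall x, x <= N -> G x < eps) /\
  (forall eps, 0 < eps -> exists N, forall x, N <= x -> 1 - G x < eps).

(* Gp, Gm are the CDFs (under theta=+1, theta=-1) of the private
   log-likelihood ratio L = log(P(+1|s)/P(-1|s)) with uniform prior.
   This is exactly the statement that the law of L under theta=+1 has
   density e^x w.r.t. its law under theta=-1, which we express on every
   half-open interval (a,b]:
     e^a (Gm b - Gm a) <= Gp b - Gp a <= e^b (Gm b - Gm a). *)
Definition llr_cdfs (Gp Gm : R -> R) : Prop :=
  is_cdf Gp /\ is_cdf Gm /\
  (forall a b, a < b ->
     exp a * (Gm b - Gm a) <= Gp b - Gp a /\
     Gp b - Gp a <= exp b * (Gm b - Gm a)).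

(* Unbounded signals: for every M, P(L > M) > 0 and P(L < -M) > 0
   (unconditional probabilities, prior 1/2 each).  Since the condition is
   for all M, using P(L <= -M) instead of P(L < -M) is equivalent. *)
Definition unbounded_signals (Gp Gm : R -> R) : Prop :=
  forall M, 0 < (1 - Gp M) / 2 + (1 - Gm M) / 2 /\
            0 < Gp (- M) / 2 + Gm (- M) / 2.

Definition Dplus (Gp Gm : R -> R) (x : R) : R :=
  ln ((1 - Gp (- x)) / (1 - Gm (- x))).
Definition Dminus (Gp Gm : R -> R) (x : R) : R :=
  ln (Gp (- x) / Gm (- x)).

(* Actions: a : nat -> bool, where a t = true means a_t = +1 and
   a t = false means a_t = -1; a 0 is unused (agents are 1,2,...).
   ellp Gp Gm a n = ell_{n+1}. *)
Fixpoint ellp (Gp Gm : R -> R) (a : nat -> bool) (n : nat) : R :=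
  match n with
  | O => 0
  | S m => let l := ellp Gp Gm a m in
           if a (S m) then l + Dplus Gp Gm l else l + Dminus Gp Gm l
  end.

Definition ell (Gp Gm : R -> R) (a : nat -> bool) (t : nat) : R :=
  ellp Gp Gm a (t - 1).

Definition ell_star (Gp Gm : R -> R) (t : nat) : R :=
  ell Gp Gm (fun _ => true) t.

(* Main.v *)
Require Import Defs.
From Stdlib Require Import Reals Lra Lia.
Open Scope R_scope.

Lemma ln_le' x y : 0 < x -> x <= y -> ln x <= ln y.
Proof. intros Hx Hxy. destruct (Req_dec x y) as [->|Hne]; [lra|]. left; apply ln_increasing; lra. Qed.
Lemma exp_le' x y : x <= y -> exp x <= exp y.
Proof. intros H. destruct (Req_dec x y) as [->|Hne]; [lra|]. left; apply exp_increasing; lra. Qed.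
Lemma ln_ub y : 0 < y -> ln y <= y - 1.
Proof. intros Hy. pose proof (exp_ineq1_le (ln y)). rewrite exp_ln in H; lra. Qed.
Lemma ln_lb y : 0 < y -> 1 - / y <= ln y.
Proof. intros Hy. pose proof (ln_ub (/y) (Rinv_0_lt_compat _ Hy)). rewrite ln_Rinv in H; lra. Qed.
Lemma eps_le u v : (forall eps, 0 < eps -> u <= v + eps) -> u <= v.
Proof. intros H. destruct (Rle_dec u v); auto. exfalso. assert (0 < (u-v)/2) by lra.
  specialize (H _ H0). lra. Qed.
Lemma ln_div' u v : 0 < u -> 0 < v -> ln (u / v) = ln u - ln v.
Proof. intros. unfold Rdiv. rewrite ln_mult, ln_Rinv; auto with real; lra. Qed.
Lemma ln_diff_ub u v : 0 < u -> 0 < v -> ln u - ln v <= (u - v) / v.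
Proof. intros. rewrite <- ln_div' by auto. pose proof (ln_ub (u/v)).
  assert (0 < u / v) by (apply Rdiv_lt_0_compat; auto).
  assert ((u - v)/v = u/v - 1) by (field; lra). lra. Qed.
Lemma ln_diff_lb u v : 0 < u -> 0 < v -> (u - v) / u <= ln u - ln v.
Proof. intros. pose proof (ln_diff_ub v u H0 H).
  assert ((u - v)/u = - ((v - u)/u)) by (field; lra). lra. Qed.
Lemma div_le a b c d : 0 <= a <= b -> 0 < d <= c -> a / c <= b / d.
Proof. intros. unfold Rdiv. apply Rmult_le_compat; try lra.
  left; apply Rinv_0_lt_compat; lra. apply Rinv_le_contravar; lra. Qed.
Lemma ln_mul_exp x q : 0 < q -> ln (exp x * q) = x + ln q.
Proof. intros. rewrite ln_mult, ln_exp; auto. apply exp_pos. Qed.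

Lemma Rp_pos x y : 0 < Rpower x y.
Proof. unfold Rpower; apply exp_pos. Qed.
Lemma Rp_dec k x y : 0 < k -> 0 < x -> x <= y -> Rpower y (-k) <= Rpower x (-k).
Proof. intros. unfold Rpower. apply exp_le'. pose proof (ln_le' x y H0 H1). nra. Qed.
Lemma Rp_lt k x y : 0 < k -> 0 < x -> x < y -> Rpower y (-k) < Rpower x (-k).
Proof. intros. unfold Rpower. apply exp_increasing. pose proof (ln_increasing x y H0 H1). nra. Qed.
Lemma Rp_mul k a b : 0 < a -> 0 < b -> Rpower (a*b) (-k) = Rpower a (-k) * Rpower b (-k).
Proof. intros. unfold Rpower. rewrite ln_mult by auto. rewrite <- exp_plus. f_equal. ring. Qed.
Lemma Rp_half k : Rpower (/2) (-k) = exp (k * ln 2).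
Proof. unfold Rpower. rewrite ln_Rinv by lra. f_equal. ring. Qed.
Lemma exp_ge1 x : 0 <= x -> 1 <= exp x.
Proof. intros. rewrite <- exp_0. apply exp_le'. auto. Qed.

Theorem lemma11 (Gp Gm : R -> R) :
  llr_cdfs Gp Gm ->
  unbounded_signals Gp Gm ->
  (exists c k x0 : R, 0 < c /\ 0 < k /\ 0 < x0 /\
     forall x, x0 < x ->
       Gm (- x) = c * Rpower x (- k) /\ Gp x = 1 - c * Rpower x (- k)) ->
  exists M : R, 0 < M /\
    forall (a : nat -> bool) (t s : nat),
      (2 <= t)%nat -> (1 <= s <= t)%nat ->
      Rabs (ell Gp Gm a s) <= M * ell_star Gp Gm t.
Proof.
    intros [HP [HM Hd]] Hunb [c [k [x0 [Hc [Hk [Hx0 Ht]]]]]].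
    destruct HP as [monP [_ [limPL limPR]]].
    destruct HM as [monM [_ [limML limMR]]].
    assert (TM : forall x, x0 < x -> Gm (-x) = c * Rpower x (-k)) by (intros x Hx; apply (Ht x Hx)).
    assert (TP : forall x, x0 < x -> Gp x = 1 - c * Rpower x (-k)) by (intros x Hx; apply (Ht x Hx)).
    clear Ht.
    assert (F1 : forall y, 0 < Gm y).
    { intros y. set (z := Rmin y (-(x0+1))).
      assert (Gm z <= Gm y) by (apply monM; apply Rmin_l).
      assert (x0 < - z) by (pose proof (Rmin_r y (-(x0+1))); unfold z in *; lra).
      pose proof (TM (-z) H0). rewrite Ropp_involutive in H1.
      pose proof (Rp_pos (-z) (-k)). nra. }
    assert (F2 : forall y, Gp y < 1).
    { intros y. set (z := Rmax y (x0+1)).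
      assert (Gp y <= Gp z) by (apply monP; apply Rmax_l).
      assert (x0 < z) by (pose proof (Rmax_r y (x0+1)); unfold z in *; lra).
      pose proof (TP z H0). pose proof (Rp_pos z (-k)). nra. }
    assert (F3 : forall y, 0 <= Gp y).
    { intros y. apply Rnot_lt_le; intros Hneg.
      destruct (limML (- Gp y) ltac:(lra)) as [N HN].
      set (z := Rmin y N).
      assert (Gp z <= Gp y) by (apply monP; apply Rmin_l).
      assert (Gm z < - Gp y) by (apply HN; apply Rmin_r).
      destruct (Hunb (-z)) as [_ H2]. rewrite Ropp_involutive in H2. lra. }
    assert (F4 : forall y, Gm y <= 1).
    { intros y. apply Rnot_lt_le; intros Hbig.
      destruct (limPR (Gm y - 1) ltac:(lra)) as [N HN].
      set (z := Rmax y N).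
      assert (Gm y <= Gm z) by (apply monM; apply Rmax_l).
      assert (1 - Gp z < Gm y - 1) by (apply HN; apply Rmax_r).
      destruct (Hunb z) as [H2 _]. lra. }
    assert (F5 : forall b, Gp b <= exp b * Gm b).
    { intros b. apply eps_le. intros eps He.
      destruct (limPL eps He) as [N HN].
      set (a := Rmin (b-1) N).
      assert (a < b) by (pose proof (Rmin_l (b-1) N); unfold a in *; lra).
      assert (Gp a < eps) by (apply HN; apply Rmin_r).
      destruct (Hd a b H) as [_ H1].
      assert (0 < exp b * Gm a) by (apply Rmult_lt_0_compat; [apply exp_pos|apply F1]).
      lra. }
    assert (F6 : forall a, exp a * (1 - Gm a) <= 1 - Gp a).
    { intros a. apply eps_le. intros eps He.
      assert (Hea: 0 < eps / exp a) by (apply Rdiv_lt_0_compat; [lra| apply exp_pos]).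
      destruct (limMR _ Hea) as [N HN].
      set (b := Rmax (a+1) N).
      assert (a < b) by (pose proof (Rmax_l (a+1) N); unfold b in *; lra).
      assert (1 - Gm b < eps / exp a) by (apply HN; apply Rmax_r).
      destruct (Hd a b H) as [H1 _]. pose proof (F2 b).
      assert (exp a * (eps / exp a) = eps) by (field; apply Rgt_not_eq, exp_pos).
      pose proof (exp_pos a).
      assert (exp a * (1 - Gm b) <= exp a * (eps / exp a)) by (apply Rmult_le_compat_l; lra).
      lra. }
    assert (F7 : forall y, Gp y <= Gm y).
    { intros y. destruct (Rle_dec y 0).
      - pose proof (F5 y). pose proof (exp_le' y 0 r). rewrite exp_0 in H0.
        pose proof (F1 y). nra.
      - pose proof (F6 y). pose proof (exp_ge1 y ltac:(lra)). pose proof (F4 y). nra. }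
    assert (F8 : forall y, 0 < Gp y).
    { intros y. set (b := Rmin y (-(x0+1))). set (a := b - 1).
      assert (Gp b <= Gp y) by (apply monP; apply Rmin_l).
      assert (x0 < - b) by (pose proof (Rmin_r y (-(x0+1))); unfold b in *; lra).
      assert (x0 < - a) by (unfold a; lra).
      destruct (Hd a b ltac:(unfold a; lra)) as [H2 _].
      pose proof (TM _ H0). pose proof (TM _ H1). rewrite Ropp_involutive in H3, H4.
      pose proof (Rp_lt k (-b) (-a) Hk ltac:(lra) ltac:(unfold a; lra)).
      pose proof (F3 a). pose proof (exp_pos a).
      assert (0 < exp a * (Gm b - Gm a)) by (apply Rmult_lt_0_compat; nra).
      lra. }
    assert (F9 : forall y, Gm y < 1).
    { intros y. set (a := Rmax y (x0+1)). set (b := a + 1).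
      assert (Gm y <= Gm a) by (apply monM; apply Rmax_l).
      assert (x0 < a) by (pose proof (Rmax_r y (x0+1)); unfold a in *; lra).
      assert (x0 < b) by (unfold b; lra).
      destruct (Hd a b ltac:(unfold b; lra)) as [_ H2].
      pose proof (TP _ H0). pose proof (TP _ H1).
      pose proof (Rp_lt k a b Hk ltac:(lra) ltac:(unfold b; lra)).
      pose proof (F4 b). pose proof (exp_pos b).
      destruct (Rle_dec (Gm b - Gm a) 0).
      + assert (exp b * (Gm b - Gm a) <= 0) by nra. nra.
      + lra. }
    set (C := x0 + 1).
    assert (HC : 1 < C) by (unfold C; lra).
    set (e2 := exp (k * ln 2)).
    assert (He2 : 1 <= e2) by (unfold e2; apply exp_ge1; pose proof (ln_increasing 1 2 ltac:(lra) ltac:(lra)); rewrite ln_1 in H; nra).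
    set (g0 := c * e2 + / Rpower (2*C) (-k)).
    assert (Hg0 : 0 < g0) by (unfold g0; pose proof (Rp_pos (2*C) (-k)); pose proof (Rinv_0_lt_compat _ H); nra).
    assert (Q1 : forall m, 0 <= m -> Gm (-m) <= g0 * Rpower (m + C) (-k)).
    { intros m Hm. pose proof (Rp_pos (m+C) (-k)) as HE. pose proof (Rp_pos (2*C) (-k)) as HE2.
      destruct (Rle_dec C m).
      - rewrite TM by (unfold C in *; lra).
        assert (Rpower m (-k) <= Rpower ((m+C) * /2) (-k)) by (apply Rp_dec; lra).
        rewrite Rp_mul, Rp_half in H by lra. fold e2 in H.
        assert (0 < / Rpower (2*C) (-k) * Rpower (m + C) (-k)) by (apply Rmult_lt_0_compat; auto with real).
        unfold g0. nra.
      - pose proof (F4 (-m)).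
        assert (Rpower (2*C) (-k) <= Rpower (m+C) (-k)) by (apply Rp_dec; lra).
        assert (/ Rpower (2*C) (-k) * Rpower (2*C) (-k) = 1) by (field; lra).
        assert (0 < / Rpower (2*C) (-k)) by auto with real.
        assert (0 <= c * e2 * Rpower (m + C) (-k)) by (apply Rmult_le_pos; nra).
        unfold g0. nra. }
    assert (Q2 : forall m, 0 <= m -> 1 - Gp m <= g0 * Rpower (m + C) (-k)).
    { intros m Hm. pose proof (Rp_pos (m+C) (-k)) as HE. pose proof (Rp_pos (2*C) (-k)) as HE2.
      destruct (Rle_dec C m).
      - rewrite TP by (unfold C in *; lra).
        assert (Rpower m (-k) <= Rpower ((m+C) * /2) (-k)) by (apply Rp_dec; lra).
        rewrite Rp_mul, Rp_half in H by lra. fold e2 in H.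
        assert (0 < / Rpower (2*C) (-k) * Rpower (m + C) (-k)) by (apply Rmult_lt_0_compat; auto with real).
        unfold g0. nra.
      - pose proof (F3 m).
        assert (Rpower (2*C) (-k) <= Rpower (m+C) (-k)) by (apply Rp_dec; lra).
        assert (/ Rpower (2*C) (-k) * Rpower (2*C) (-k) = 1) by (field; lra).
        assert (0 < / Rpower (2*C) (-k)) by auto with real.
        assert (0 <= c * e2 * Rpower (m + C) (-k)) by (apply Rmult_le_pos; nra).
        unfold g0. nra. }
    set (beta := c / 2).
    assert (L : forall x, 0 <= x -> beta * Rpower (x + C) (-k) <= Dplus Gp Gm x).
    { intros x Hx. unfold Dplus.
      set (p := Gp (-x)). set (q := Gm (-x)). set (q1 := Gm (-x-1)).
      assert (Hpq : p <= q) by apply F7.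
      assert (Hp0 : 0 <= p) by apply F3.
      assert (Hq1 : q1 <= q) by (apply monM; lra).
      assert (0 < 1 - q) by (pose proof (F9 (-x)); unfold q; lra).
      assert (0 < 1 - p) by (pose proof (F2 (-x)); unfold p; lra).
      rewrite ln_div' by lra.
      pose proof (ln_diff_lb (1-p) (1-q) ltac:(lra) ltac:(lra)).
      assert ((q - p)/1 <= ((1-p) - (1-q)) / (1-p)) by (apply div_le; lra).
      assert (p <= q - q1/2).
      { destruct (Hd (-x-1) (-x) ltac:(lra)) as [_ H3].
        pose proof (F5 (-x-1)). fold q1 in H4.
        pose proof (exp_le' (-x) 0 ltac:(lra)). rewrite exp_0 in H5.
        pose proof (exp_ineq1_le (x+1)).
        assert (exp (-x-1) * exp (x+1) = 1) by (rewrite <- exp_plus; replace (-x-1+(x+1)) with 0 by ring; apply exp_0).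
        pose proof (exp_pos (-x-1)). pose proof (F1 (-x-1)) as Hq1p. fold q1 in Hq1p.
        assert (exp (-x) * (q - q1) <= q - q1) by nra.
        assert (0 <= exp (-x-1) * (exp (x+1) - 2)) by (apply Rmult_le_pos; lra).
        assert (exp (-x-1) <= /2) by nra.
        assert (exp (-x-1) * q1 <= /2 * q1) by (apply Rmult_le_compat_r; lra).
        fold p q q1 in H3. lra. }
      assert (c * Rpower (x + C) (-k) <= q1).
      { destruct (Rlt_dec x0 (x+1)).
        - unfold q1. replace (-x-1) with (-(x+1)) by ring. rewrite TM by auto.
          assert (Rpower (x+C) (-k) <= Rpower (x+1) (-k)) by (apply Rp_dec; unfold C in *; lra). nra.
        - assert (HG : Gm (-(x0+1)) <= q1) by (apply monM; lra).
          rewrite TM in HG by lra.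
          assert (Rpower (x+C) (-k) <= Rpower (x0+1) (-k)) by (apply Rp_dec; unfold C in *; lra). nra. }
      unfold beta. replace ((q-p)/1) with (q-p) in H2 by field. lra. }
    set (g := g0 * (/ (1 - Gm 0) + / Gp 0)).
    assert (Hi1 : 0 < / (1 - Gm 0)) by (pose proof (F9 0); apply Rinv_0_lt_compat; lra).
    assert (Hi2 : 0 < / Gp 0) by (apply Rinv_0_lt_compat; apply F8).
    assert (Hg : 0 < g) by (unfold g; nra).
    set (th := Rpower (3/2) (-k)).
    assert (Hth0 : 0 < th) by apply Rp_pos.
    assert (Hth1 : th < 1).
    { pose proof (Rp_lt k 1 (3/2) Hk ltac:(lra) ltac:(lra)). unfold Rpower at 2 in H.
      rewrite ln_1, Rmult_0_r, exp_0 in H. exact H. }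
    assert (Hlth : ln (1 - th) < 0) by (rewrite <- ln_1; apply ln_increasing; lra).
    set (R0 := C + 2 * (- ln (1 - th))).
    assert (HR0 : C <= R0) by (unfold R0; lra).
    set (K := / Gp (- R0) + / (1 - Gm R0)).
    assert (HK1 : 0 < / Gp (- R0)) by (apply Rinv_0_lt_compat, F8).
    assert (HK2 : 0 < / (1 - Gm R0)) by (apply Rinv_0_lt_compat; pose proof (F9 R0); lra).
    assert (Hth_mul : forall m, 0 < m -> Rpower (m * (3/2)) (-k) = Rpower m (-k) * th)
      by (intros m Hm; unfold th; apply Rp_mul; lra).
    assert (Step : forall l (b : bool) l', l' = (if b then l + Dplus Gp Gm l else l + Defs.Dminus Gp Gm l) ->
               Rabs l' <= K \/ Rabs l' <= Rabs l + g * Rpower (Rabs l + C) (-k)).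
    { intros l b l' Hl'.
      destruct (Rle_dec 0 l) as [Hl|Hl].
      - rewrite (Rabs_right l) by lra.
        pose proof (Rp_pos (l + C) (-k)) as HE.
        destruct b.
        +
          right. unfold Dplus in Hl'.
          set (p := Gp (-l)) in *. set (q := Gm (-l)) in *.
          assert (Hpq : p <= q) by apply F7.
          assert (Hp0 : 0 <= p) by apply F3.
          assert (Hq0 : q <= Gm 0) by (apply monM; lra).
          pose proof (F9 0).
          rewrite ln_div' in Hl' by (unfold p, q in *; pose proof (F2 (-l)); lra).
          pose proof (ln_diff_ub (1-p) (1-q) ltac:(lra) ltac:(lra)).
          assert (((1-p) - (1-q)) / (1-q) <= q / (1 - Gm 0)) by (apply div_le; lra).
          assert (ln (1-q) <= ln (1-p)) by (apply ln_le'; lra).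
          pose proof (Q1 l Hl) as HQ. fold q in HQ.
          assert (q / (1 - Gm 0) <= g0 * Rpower (l + C) (-k) * / (1 - Gm 0))
            by (unfold Rdiv; apply Rmult_le_compat_r; lra).
          assert (g0 * Rpower (l + C) (-k) * / (1 - Gm 0) <= g * Rpower (l + C) (-k))
            by (unfold g; nra).
          rewrite Rabs_right; lra.
        +
          unfold Defs.Dminus in Hl'.
          set (p := Gp (-l)) in *. set (q := Gm (-l)) in *.
          assert (Hp : 0 < p) by apply F8. assert (Hq : 0 < q) by apply F1.
          assert (Hq1 : q <= 1) by apply F4.
          rewrite ln_div' in Hl' by lra.
          assert (Hup : ln p <= - l + ln q).
          { rewrite <- ln_mul_exp by lra. apply ln_le'; auto. apply F5. }
          destruct (Rlt_dec l R0) as [Hs|Hs].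
          * left. apply Rabs_le.
            assert (ln q <= 0) by (rewrite <- ln_1; apply ln_le'; lra).
            pose proof (ln_lb p Hp).
            assert (Gp (- R0) <= p) by (apply monP; lra).
            assert (/ p <= / Gp (- R0)) by (apply Rinv_le_contravar; auto; apply F8).
            unfold K. lra.
          * right. rewrite Rabs_left1 by lra.
            assert (Hlx : x0 < l) by (unfold C in *; lra).
            set (b' := l * (3/2)).
            destruct (Hd (- b') (- l) ltac:(unfold b'; lra)) as [H1 _].
            assert (Hqv : q = c * Rpower l (-k)) by (unfold q; apply TM; auto).
            rewrite (TM b') in H1 by (unfold b'; lra). fold p q in H1. rewrite Hqv in H1.
            unfold b' in H1. rewrite Hth_mul in H1 by lra.
            pose proof (F3 (- (l * (3/2)))).
            assert (Hlow : exp (- b') * (c * Rpower l (-k) * (1 - th)) <= p) by (unfold b'; lra).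
            pose proof (Rp_pos l (-k)).
            assert (0 < c * Rpower l (-k) * (1 - th)) by (apply Rmult_lt_0_compat; nra).
            apply ln_le' in Hlow; [|apply Rmult_lt_0_compat; auto; apply exp_pos].
            rewrite ln_mul_exp in Hlow by auto.
            rewrite ln_mult in Hlow by (auto; nra || lra).
            rewrite Hqv in Hl'. unfold b' in Hlow.
            assert (0 <= g * Rpower (l + C) (-k)) by (apply Rmult_le_pos; lra).
            unfold R0 in Hs. lra.
      - apply Rnot_le_lt in Hl.
        rewrite (Rabs_left l) by lra.
        set (m := - l) in *.
        assert (Hm : 0 < m) by (unfold m; lra).
        assert (Hlm : l = - m) by (unfold m; ring).
        pose proof (Rp_pos (m + C) (-k)) as HE.
        destruct b.
        +
          unfold Dplus in Hl'. fold m in Hl'.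
          assert (HA : 0 < 1 - Gp m) by (pose proof (F2 m); lra).
          assert (HB : 0 < 1 - Gm m) by (pose proof (F9 m); lra).
          rewrite ln_div' in Hl' by lra.
          assert (Hlow : m + ln (1 - Gm m) <= ln (1 - Gp m)).
          { rewrite <- ln_mul_exp by lra. apply ln_le'; [apply Rmult_lt_0_compat; [apply exp_pos|lra] | apply F6]. }
          destruct (Rlt_dec m R0) as [Hs|Hs].
          * left. apply Rabs_le.
            pose proof (ln_diff_ub (1 - Gp m) (1 - Gm m) HA HB).
            assert (Gm m <= Gm R0) by (apply monM; lra).
            pose proof (F9 R0). pose proof (F7 m). pose proof (F3 m).
            assert (((1 - Gp m) - (1 - Gm m)) / (1 - Gm m) <= 1 / (1 - Gm R0)) by (apply div_le; lra).
            rewrite Rdiv_1_l in H4.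
            unfold K. unfold m in *. lra.
          * right.
            assert (Hlx : x0 < m) by (unfold C in *; lra).
            set (b' := m * (3/2)).
            destruct (Hd m b' ltac:(unfold b'; lra)) as [_ H1].
            rewrite (TP m Hlx) in H1, HA, Hlow, Hl'. rewrite (TP b') in H1 by (unfold b'; lra).
            unfold b' in H1 at 1. rewrite Hth_mul in H1 by lra.
            pose proof (F4 b').
            pose proof (Rp_pos m (-k)).
            assert (0 < c * Rpower m (-k) * (1 - th)) by (apply Rmult_lt_0_compat; nra).
            assert (Hex : exp (- b') * exp b' = 1) by (rewrite <- exp_plus; replace (- b' + b') with 0 by ring; apply exp_0).
            assert (Hlow2 : exp (- b') * (c * Rpower m (-k) * (1 - th)) <= 1 - Gm m).
            { assert (H5 : exp (-b') * (c * Rpower m (-k) * (1 - th)) <= exp (-b') * (exp b' * (Gm b' - Gm m))).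
              { apply Rmult_le_compat_l. left; apply exp_pos. lra. }
              assert (exp (-b') * (exp b' * (Gm b' - Gm m)) = Gm b' - Gm m)
                by (rewrite <- Rmult_assoc, Hex; ring). lra. }
            apply ln_le' in Hlow2; [|apply Rmult_lt_0_compat; auto; apply exp_pos].
            rewrite ln_mul_exp in Hlow2 by auto.
            rewrite ln_mult in Hlow2 by (auto; nra || lra).
            replace (1 - (1 - c * Rpower m (-k))) with (c * Rpower m (-k)) in Hl', Hlow by ring.
            unfold b' in Hlow2.
            assert (0 <= g * Rpower (m + C) (-k)) by (apply Rmult_le_pos; lra).
            rewrite Rabs_right by lra.
            unfold R0 in Hs. lra.
        +
          right. unfold Defs.Dminus in Hl'. fold m in Hl'.
          pose proof (F8 m). pose proof (F1 m).
          rewrite ln_div' in Hl' by lra.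
          assert (ln (Gp m) <= ln (Gm m)) by (apply ln_le'; auto).
          pose proof (ln_diff_ub (Gm m) (Gp m) H0 H).
          assert (Gp 0 <= Gp m) by (apply monP; lra).
          pose proof (F4 m). pose proof (F7 m).
          assert ((Gm m - Gp m) / Gp m <= (1 - Gp m) / Gp 0) by (apply div_le; pose proof (F8 0); lra).
          pose proof (Q2 m ltac:(lra)).
          assert ((1 - Gp m) / Gp 0 <= g0 * Rpower (m + C) (-k) * / Gp 0)
            by (unfold Rdiv; apply Rmult_le_compat_r; lra).
          assert (g0 * Rpower (m + C) (-k) * / Gp 0 <= g * Rpower (m + C) (-k))
            by (unfold g; nra).
          rewrite Rabs_left1 by lra. lra. }
    assert (HKpos : 0 < K) by (unfold K; lra).
    assert (Hbeta : 0 < beta) by (unfold beta; lra).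
    set (EC := Rpower C (-k)).
    assert (HEC : 0 < EC) by apply Rp_pos.
    set (lam := 1 + (K + C)/C + 2*g*EC/C + g*e2/beta).
    assert (HlamC : lam * C = C + (K + C) + 2*g*EC + g*e2/beta*C) by (unfold lam; field; lra).
    assert (Hge : 0 < g*e2/beta) by (apply Rdiv_lt_0_compat; nra).
    assert (Hlam1 : 1 <= lam).
    { unfold lam. assert (0 < (K+C)/C) by (apply Rdiv_lt_0_compat; lra).
      assert (0 < 2*g*EC/C) by (apply Rdiv_lt_0_compat; nra). lra. }
    assert (HlamK : K + C <= lam * C) by (rewrite HlamC; nra).
    assert (HlamE : 2 * g * EC <= lam * C) by (rewrite HlamC; nra).
    assert (Hlamb : g * e2 <= lam * beta).
    { assert (g*e2/beta*beta = g*e2) by (field; lra).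
      assert (g*e2/beta <= lam) by (unfold lam; assert (0 < (K+C)/C) by (apply Rdiv_lt_0_compat; lra);
        assert (0 < 2*g*EC/C) by (apply Rdiv_lt_0_compat; nra); lra).
      nra. }
    set (X := fun n => ellp Gp Gm (fun _ => true) n).
    assert (Inv : forall (a : nat -> bool) n, 0 <= X n /\ Rabs (ellp Gp Gm a n) + C <= lam * (X n + C)).
    { intros a n. induction n as [|n [HX Hinv]].
      - simpl. unfold X. simpl. rewrite Rabs_R0. split; [lra|nra].
      - assert (HXS : X (S n) = X n + Dplus Gp Gm (X n)) by reflexivity.
        set (x := X n) in *. set (l := ellp Gp Gm a n) in *.
        pose proof (L x HX) as Lx.
        pose proof (Rp_pos (x + C) (-k)) as HEx.
        assert (Hx' : x + beta * Rpower (x + C) (-k) <= X (S n)) by lra.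
        assert (0 < beta * Rpower (x + C) (-k)) by (apply Rmult_lt_0_compat; lra).
        split; [lra|].
        destruct (Step l (a (S n)) (ellp Gp Gm a (S n)) eq_refl) as [HS|HS].
        + nra.
        + set (l' := ellp Gp Gm a (S n)) in *.
          set (w := Rabs l + C) in *. set (W := lam * (x + C)) in *.
          pose proof (Rabs_pos l).
          assert (Hw : w = Rabs l + C) by reflexivity.
          assert (HWd : W = lam * (x + C)) by reflexivity.
          assert (HW : lam * (X (S n) + C) >= W + lam * (beta * Rpower (x + C) (-k))) by (unfold W; nra).
          destruct (Rle_dec w (W/2)).
          * assert (Rpower w (-k) <= EC) by (apply Rp_dec; unfold w; lra).
            assert (lam * C <= W) by (unfold W; nra).
            assert (g * Rpower w (-k) <= g * EC) by (apply Rmult_le_compat_l; lra).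
            assert (0 <= lam * (beta * Rpower (x + C) (-k))) by nra.
            lra.
          * assert (Rpower w (-k) <= Rpower (W * /2) (-k)) by (apply Rp_dec; unfold w in *; lra).
            rewrite Rp_mul, Rp_half in H1 by (unfold W; nra). fold e2 in H1.
            assert (Rpower W (-k) <= Rpower (x + C) (-k)) by (apply Rp_dec; unfold W; nra).
            pose proof (Rp_pos W (-k)).
            assert (g * Rpower w (-k) <= g * (Rpower W (-k) * e2)) by (apply Rmult_le_compat_l; lra).
            assert (g * e2 * Rpower W (-k) <= lam * beta * Rpower W (-k)) by (apply Rmult_le_compat_r; lra).
            assert (lam * beta * Rpower W (-k) <= lam * beta * Rpower (x + C) (-k)) by (apply Rmult_le_compat_l; nra).
            lra. }
    assert (Mono : forall n m, (n <= m)%nat -> X n <= X m).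
    { intros n m Hnm. induction Hnm; [lra|].
      assert (HXS : X (S m) = X m + Dplus Gp Gm (X m)) by reflexivity.
      destruct (Inv (fun _ => true) m) as [HX _].
      pose proof (L (X m) HX). pose proof (Rp_pos (X m + C) (-k)).
      assert (0 < beta * Rpower (X m + C) (-k)) by (apply Rmult_lt_0_compat; lra). lra. }
    set (x1 := X 1%nat).
    assert (Hx1 : 0 < x1).
    { assert (HXS : x1 = X 0%nat + Dplus Gp Gm (X 0%nat)) by reflexivity.
      assert (X 0%nat = 0) by reflexivity. rewrite H in HXS.
      pose proof (L 0 ltac:(lra)). pose proof (Rp_pos (0 + C) (-k)).
      assert (0 < beta * Rpower (0 + C) (-k)) by (apply Rmult_lt_0_compat; lra). lra. }
    exists (lam + lam * C / x1). split.
    { assert (0 < lam * C / x1) by (apply Rdiv_lt_0_compat; nra). lra. }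
    intros a t s Ht Hs. unfold ell_star, ell.
    change (ellp Gp Gm (fun _ => true) (t - 1)) with (X (t - 1)%nat).
    destruct (Inv a (s - 1)%nat) as [_ Hi].
    assert (X (s-1)%nat <= X (t-1)%nat) by (apply Mono; lia).
    assert (x1 <= X (t-1)%nat) by (apply Mono; lia).
    assert (lam * C / x1 * x1 = lam * C) by (field; lra).
    assert (lam * C / x1 * x1 <= lam * C / x1 * X (t-1)%nat)
      by (apply Rmult_le_compat_l; [left; apply Rdiv_lt_0_compat; nra | lra]).
    nra.
Qed.
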